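(* Let $\theta\in(\mathbb{R}^N_{>0})^R$ and $w\in\mathbb{R}^N_{>0}$ be positive vectors. Let $y\in\mathcal{B}$ and let $z$ be a point of the base polytope of the submodular function $F=\sum_{r\in[R]}F_r$. Then there exists $\xi\in\mathcal{B}$ such that $A\xi=z$ and $$\|\xi-y\|_{2,\theta}\le\sqrt{\tfrac{\|\theta\|_{1,\infty}}{2}}\,\|Ay-z\|_1 .$$ Moreover, $\|\xi-y\|_{2,\theta}\le\sqrt{\tfrac{\|\theta\|_{1,\infty}\,\|w^{-1}\|_1}{2}}\,\|Ay-z\|_{2,w}$, where $w^{-1}=(w_1^{-1},\dots,w_N^{-1})$.
   Context: Let $N,R$ be positive integers and $[N]=\{1,\dots,N\}$. For each $r\in[R]$, $F_r:2^{[N]}\to\mathbb{R}$ is a submodular function with $F_r(\emptyset)=0$. For $z\in\mathbb{R}^N$ and $S\subseteq[N]$, $z(S)=\sum_{i\in S}z_i$. The base polytope of a normalized submodular $G$ on $[N]$ is $\{u\in\mathbb{R}^N: u(S)\le G(S)\ \forall S\subseteq[N],\ u([N])=G([N])\}$; $\mathcal{B}_r$ denotes the base polytope of $F_r$ and $\mathcal{B}=\mathcal{B}_1\times\cdots\times\mathcal{B}_R\subseteq(\mathbb{R}^N)^R$, with elements $y=(y_1,\dots,y_R)$ and $y_{r,i}$ the $i$-th coordinate of $y_r$. The linear map $A:(\mathbb{R}^N)^R\to\mathbb{R}^N$ is $Ay=\sum_{r}y_r$. An element $i\in[N]$ is incident to $F_r$ if there is $S\subseteq[N]\setminus\{i\}$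 with $F_r(S\cup\{i\})\neq F_r(S)$; $S_r$ is the set of elements incident to $F_r$. Assume every $i\in[N]$ lies in at least one $S_r$. For $w\in\mathbb{R}^N_{\ge 0}$, $\|z\|_{2,w}=\sqrt{\sum_i w_iz_i^2}$; for $\theta=(\theta_1,\dots,\theta_R)\in(\mathbb{R}^N_{\ge0})^R$ and $y\in(\mathbb{R}^N)^R$, $\|y\|_{2,\theta}=\sqrt{\sum_r\|y_r\|_{2,\theta_r}^2}$, and $\|\theta\|_{1,\infty}=\sum_{i\in[N]}\max_{r\in[R]:\,i\in S_r}\theta_{r,i}$. *)

(* Defs.v *)
From HB Require Import structures.
From mathcomp Require Import all_boot all_order all_algebra.
Set Implicit Arguments. Unset Strict Implicit. Unset Printing Implicit Defensive.
Import Order.TTheory GRing.Theory Num.Theory.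
Local Open Scope ring_scope.

Section Defs.
Variables (K : rcfType) (N : nat).

Definition vecN := 'I_N -> K.

Definition setsum (z : vecN) (S : {set 'I_N}) : K := \sum_(i in S) z i.

Definition normalized (G : {set 'I_N} -> K) : Prop := G set0 = 0.

Definition submodular (G : {set 'I_N} -> K) : Prop :=
  forall A B : {set 'I_N}, G (A :|: B) + G (A :&: B) <= G A + G B.

Definition in_base (G : {set 'I_N} -> K) (u : vecN) : Prop :=
  (forall S : {set 'I_N}, setsum u S <= G S) /\ setsum u [set: 'I_N] = G [set: 'I_N].

Definition incident (G : {set 'I_N} -> K) (i : 'I_N) : bool :=
  [exists S : {set 'I_N}, (i \notin S) && (G (i |: S) != G S)].

Definition norm1 (z : vecN) : K := \sum_i `|z i|.

Definition norm2w (w z : vecN) : K := Num.sqrt (\sum_i w i * z i ^+ 2).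

End Defs.

Section Prod.
Variables (K : rcfType) (N M : nat).
(* M plays the role of R (number of functions) *)

Definition sumF (F : 'I_M -> {set 'I_N} -> K) : {set 'I_N} -> K :=
  fun S => \sum_r F r S.

Definition Aop (y : 'I_M -> 'I_N -> K) : 'I_N -> K := fun i => \sum_r y r i.

Definition norm2theta (theta y : 'I_M -> 'I_N -> K) : K :=
  Num.sqrt (\sum_r \sum_i theta r i * y r i ^+ 2).

(* ||theta||_{1,infty} = sum_i max_{r : i in S_r} theta_{r,i}; the max is
   iterated Num.max starting from 0, which is harmless since theta >= 0 and
   every i is incident to some F_r. *)
Definition norm1inf (F : 'I_M -> {set 'I_N} -> K) (theta : 'I_M -> 'I_N -> K) : K :=
  \sum_i \big[Num.max/0]_(r | incident (F r) i) theta r i.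

End Prod.

(* Main.v *)
Require Import Defs.
From HB Require Import structures.
From mathcomp Require Import all_boot all_order all_algebra.
From mathcomp Require Import ring lra.
From Stdlib Require Import ClassicalEpsilon FunctionalExtensionality Classical.
Set Implicit Arguments. Unset Strict Implicit. Unset Printing Implicit Defensive.
Import Order.TTheory GRing.Theory Num.Theory.
Local Open Scope ring_scope.

Section LP.
Variables (K : realFieldType) (I J : finType).
Definition vec := I -> K.
Definition vadd (x d : vec) (t : K) : vec := fun v => x v + t * d v.
Definition vzero : vec := fun _ => 0.
Definition lin (h : vec -> K) (d : vec) := h d - h vzero.
Definition affine (h : vec -> K) := forall x d t, h (vadd x d t) = h x + t * lin h d.

Lemma argmin_ex (T : finType) (p : pred T) (g : T -> K) :
  (exists j, p j) -> exists2 j0, p j0 & forall j, p j -> g j0 <= g j.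
Proof.
move=> [j pj]; case: (arg_minP g pj) => j0 pj0 H; exists j0 => // k pk; exact: H.
Qed.

Variables (h : J -> vec -> K) (f : vec -> K).
Hypotheses (haff : forall j, affine (h j)) (faff : affine f).
Definition feas x := forall j, h j x <= 0.
Hypothesis hbnd : forall v, exists B, forall x, feas x -> `|x v| <= B.

Definition act x : {set J} := [set j | h j x == 0].
Definition nondeg x := forall d, (forall j, j \in act x -> lin (h j) d = 0) -> d = vzero.

Lemma small_step x d : feas x -> (forall j, h j x = 0 -> lin (h j) d <= 0) ->
  exists2 eps, 0 < eps & feas (vadd x d eps).
Proof.
move=> fx hd.
pose p j := (h j x < 0) && (0 < lin (h j) d).
have [/existsP [j pj]|nP] := boolP [exists j, p j]; last first.
- exists 1 => // j; rewrite haff mul1r.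
  have [/eqP hj0|hj0] := boolP (h j x == 0).
    by rewrite hj0 add0r; apply: hd.
  have hjlt : h j x < 0 by rewrite lt_neqAle hj0 fx.
  have : ~~ p j by apply: contraNN nP => pj; apply/existsP; exists j.
  by rewrite /p hjlt /= -leNgt => hl; lra.
- case: (argmin_ex (fun j => - h j x / lin (h j) d) (ex_intro _ j pj)) => j0.
  move=> /andP[h0 l0] Hmin; exists (- h j0 x / lin (h j0) d).
    by apply: divr_gt0; lra.
  move=> k; rewrite haff.
  have [/eqP hk0|hk0] := boolP (h k x == 0).
    rewrite hk0 add0r; apply: mulr_ge0_le0; last by apply: hd.
    by apply: divr_ge0; lra.
  have hklt : h k x < 0 by rewrite lt_neqAle hk0 fx.
  have [lk|lk] := leP (lin (h k) d) 0.
    have : 0 <= - h j0 x / lin (h j0) d by apply: divr_ge0; lra.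
    by move=> g0; have := mulr_ge0_le0 g0 lk; lra.
  have pk : p k by rewrite /p hklt lk.
  have := Hmin k pk; rewrite ler_pdivlMr //.
  rewrite mulrAC.
  move=> H; lra.
Qed.

Lemma vaddE x d t v : vadd x d t v = x v + t * d v. Proof. by []. Qed.

Lemma step x : feas x -> ~ nondeg x ->
  exists x', [/\ feas x', f x' <= f x & (#|~: act x'| < #|~: act x|)%N].
Proof.
move=> fx nd.
have [d [hd dn0]] : exists d, (forall j, j \in act x -> lin (h j) d = 0) /\ d <> vzero.
  apply: NNPP => nex; apply: nd => d hd; apply: NNPP => dn; apply: nex; by exists d.
pose s : K := if lin f d <= 0 then 1 else -1.
have hs : s * lin f d <= 0 by rewrite /s; case: ifP => H; lra.
have s2 : `|s| = 1 by rewrite /s; case: ifP => _; rewrite ?normrN normr1.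
pose p j := 0 < s * lin (h j) d.
have [/existsP [j pj]|nP] := boolP [exists j, p j]; last first.
  exfalso; apply: dn0; apply: functional_extensionality => v.
  apply: NNPP => dv; have [B HB] := hbnd v.
  pose t := (B + `|x v| + 1) / `|d v|.
  have dvp : 0 < `|d v| by rewrite normr_gt0; apply/eqP.
  have t0 : 0 <= t by apply: divr_ge0 => //; have := normr_ge0 (x v); have := HB x fx; lra.
  have tdv : t * `|d v| = B + `|x v| + 1 by rewrite /t mulfVK // gt_eqF.
  clearbody t.
  have F' : feas (vadd x d (s * t)).
    move=> j; rewrite haff.
    have : ~~ p j by apply: contraNN nP => pj; apply/existsP; exists j.
    rewrite /p -leNgt => H; have := fx j; rewrite -mulrA (mulrC t) mulrA.
    have := mulr_le0_ge0 H t0; lra.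
  have := HB _ F'; rewrite vaddE.
  have : `|s * t * d v| = B + `|x v| + 1.
    by rewrite normrM normrM s2 mul1r (ger0_norm t0).
  have := lerB_normD (s * t * d v) (x v).
  rewrite (addrC (x v)); lra.
case: (argmin_ex (fun j => - h j x / (s * lin (h j) d)) (ex_intro _ j pj)) => j0 pj0 Hmin.
pose lam := - h j0 x / (s * lin (h j0) d).
have lam0 : 0 <= lam by apply: divr_ge0 => //; [have := fx j0; lra | rewrite /p in pj0; lra].
exists (vadd x d (s * lam)); split.
- move=> k; rewrite haff -mulrA (mulrC lam) mulrA.
  have [pk|npk] := boolP (p k).
    have := Hmin k pk; rewrite -/lam ler_pdivlMr //; rewrite /p in pk.
    by rewrite mulrC; lra.
  rewrite /p -leNgt in npk; have := mulr_le0_ge0 npk lam0; have := fx k; lra.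
- rewrite faff -mulrA (mulrC lam) mulrA; have := mulr_le0_ge0 hs lam0; lra.
- apply: proper_card; apply/properP; split.
    apply/subsetP => k; rewrite !inE; apply: contraNN => /eqP hk.
    rewrite haff hk add0r; apply/eqP.
    suff -> : lin (h k) d = 0 by rewrite mulr0.
    by apply: hd; rewrite inE hk.
  exists j0.
    rewrite !inE; apply/eqP => hj0; move: pj0; rewrite /p.
    by rewrite hd ?mulr0 ?ltxx // inE hj0.
  rewrite !inE negbK haff /lam.
  rewrite /p in pj0.
  have un : s * lin (h j0) d != 0 by rewrite gt_eqF.
  by rewrite mulrAC mulrC divfK // subrr.
Qed.

Lemma descent n x : feas x -> (#|~: act x| <= n)%N ->
  exists x', [/\ feas x', f x' <= f x & nondeg x'].
Proof.
elim: n x => [|n IH] x fx hn.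
  have [nd|nd] := classic (nondeg x); first by exists x.
  have [x' [_ _ c]] := step fx nd; move: hn; rewrite leqn0 => /eqP h0.
  by rewrite h0 in c.
have [nd|nd] := classic (nondeg x); first by exists x.
have [x' [f' l' c]] := step fx nd.
have [|x'' [f'' l'' n'']] := IH x' f'.
  by rewrite -ltnS; apply: leq_trans c hn.
by exists x''; split => //; apply: le_trans l'' l'.
Qed.

Lemma nondeg_uniq x y : nondeg x -> act x = act y -> x = y.
Proof.
move=> nd ea.
have hy : y = vadd x (fun v => y v - x v) 1.
  by apply: functional_extensionality => v; rewrite vaddE mul1r addrC subrK.
have := nd (fun v => y v - x v).
have H : forall j, j \in act x -> lin (h j) (fun v => y v - x v) = 0.
  move=> j ja; have := haff j x (fun v => y v - x v) 1; rewrite -hy mul1r.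
  have hx : h j x = 0 by move: ja; rewrite inE => /eqP.
  have hyj : h j y = 0 by move: ja; rewrite ea inE => /eqP.
  by rewrite hx hyj add0r => <-.
move=> /(_ H) e; apply: functional_extensionality => v.
have := congr1 (fun g => g v) e; rewrite /vzero /= => /eqP; rewrite subr_eq0 => /eqP ->.
by [].
Qed.

Definition gprop (A : {set J}) x := [/\ feas x, act x = A & nondeg x].
Definition cand A : vec := epsilon (inhabits vzero) (gprop A).
Definition goodb A : bool :=
  if excluded_middle_informative (exists x, gprop A x) then true else false.

Lemma LPmin x0 : feas x0 -> exists2 xs, feas xs & forall x, feas x -> f xs <= f x.
Proof.
move=> f0.
have [x1 [fx1 _ nd1]] := descent f0 (leqnn _).
have g1 : goodb (act x1).
  by rewrite /goodb; case: excluded_middle_informative => // [[]]; exists x1.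
have [A gA Hmin] := @argmin_ex _ goodb (fun A => f (cand A)) (ex_intro (fun B => goodb B) _ g1).
have candP B : goodb B -> gprop B (cand B).
  rewrite /goodb; case: excluded_middle_informative => // ex _.
  exact: epsilon_spec.
have [fA _ _] := candP A gA.
exists (cand A) => // x fx.
have [x' [fx' lx' nd']] := descent fx (leqnn _).
have g' : goodb (act x').
  by rewrite /goodb; case: excluded_middle_informative => // [[]]; exists x'.
have [_ ea _] := candP _ g'.
have ex' : cand (act x') = x' by apply: esym; apply: nondeg_uniq => //; rewrite ea.
apply: le_trans (Hmin _ g') _; rewrite ex' //.
Qed.

Lemma opt_dir xs d : feas xs -> (forall x, feas x -> f xs <= f x) ->
  (forall j, h j xs = 0 -> lin (h j) d <= 0) -> 0 <= lin f d.
Proof.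
move=> fxs opt hd; have [eps e0 fe] := small_step fxs hd.
have := opt _ fe; rewrite faff => H.
rewrite leNgt; apply/negP => hl; have : 0 < - lin f d by rewrite oppr_gt0.
move=> /(mulr_gt0 e0); lra.
Qed.
End LP.

Section Aff.
Variables (K : realFieldType) (I : finType).
Implicit Types (h g : vec K I -> K).

Lemma affine_const c : affine (fun _ : vec K I => c).
Proof. by move=> x d t; rewrite /lin subrr mulr0 addr0. Qed.

Lemma affine_coord v : affine (fun x : vec K I => x v).
Proof. by move=> x d t; rewrite /lin /vzero vaddE subr0. Qed.

Lemma affineD h g : affine h -> affine g -> affine (fun x => h x + g x).
Proof. move=> ah ag x d t; rewrite ah ag /lin; ring. Qed.

Lemma affineN h : affine h -> affine (fun x => - h x).
Proof. move=> ah x d t; rewrite ah /lin; ring. Qed.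

Lemma affineB h g : affine h -> affine g -> affine (fun x => h x - g x).
Proof. by move=> ah ag; apply: affineD => //; apply: affineN. Qed.

Lemma affineZ c h : affine h -> affine (fun x => c * h x).
Proof. move=> ah x d t; rewrite ah /lin; ring. Qed.

Lemma affine_sum (T : Type) (s : seq T) (P : pred T) (H : T -> vec K I -> K) :
  (forall i, affine (H i)) -> affine (fun x => \sum_(i <- s | P i) H i x).
Proof.
move=> ah x d t; rewrite /lin.
rewrite (eq_bigr (fun i => H i x + t * (H i d - H i (@vzero K I)))); last by move=> i _; apply: ah.
by rewrite big_split /= -mulr_sumr -sumrB.
Qed.

Lemma lin_sum (T : Type) (s : seq T) (P : pred T) (H : T -> vec K I -> K) d :
  lin (fun x => \sum_(i <- s | P i) H i x) d = \sum_(i <- s | P i) lin (H i) d.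
Proof. by rewrite /lin sumrB. Qed.
End Aff.

Section Helpers.
Variables (K : rcfType) (N : nat).

Lemma nonincident (G : {set 'I_N} -> K) (u : 'I_N -> K) i :
  normalized G -> in_base G u -> ~~ incident G i -> u i = 0.
Proof.
move=> hn [h1 h2] /existsPn ni.
have ni' (S : {set 'I_N}) : i \notin S -> G (i |: S) = G S.
  by move=> iS; move: (ni S); rewrite iS /= negbK => /eqP.
have up : u i <= 0.
  have E1 : [set i] = i |: set0 by rewrite setU0.
  by have := h1 [set i]; rewrite /setsum big_set1 E1 ni' ?inE // hn.
have lo : 0 <= u i.
  have E : setsum u [set: 'I_N] = u i + setsum u ([set: 'I_N] :\ i).
    by rewrite /setsum (big_setD1 i).
  have h3 := ni' ([set: 'I_N] :\ i) (negbT (setD11 _ _)); rewrite setD1K ?in_setT // in h3.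
  have := h1 ([set: 'I_N] :\ i); lra.
lra.
Qed.

Lemma sq_le (I : finType) (P : pred I) (a : I -> K) :
  (forall r, P r -> 0 <= a r) -> \sum_(r | P r) a r ^+ 2 <= (\sum_(r | P r) a r) ^+ 2.
Proof.
move=> h; rewrite expr2 mulr_suml; apply: ler_sum => r Pr.
rewrite expr2; apply: ler_wpM2l; first exact: h.
rewrite (bigD1 r) //= lerDl; apply: sumr_ge0 => s /andP[Ps _]; exact: h.
Qed.

Lemma CS (w u : 'I_N -> K) : (forall i, 0 < w i) ->
  norm1 u <= Num.sqrt (norm1 (fun i => (w i)^-1)) * norm2w w u.
Proof.
move=> hw.
set A := norm1 (fun i => (w i)^-1).
set B := \sum_i w i * u i ^+ 2.
have A0 : 0 <= A by apply: sumr_ge0 => i _; exact: normr_ge0.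
have B0 : 0 <= B by apply: sumr_ge0 => i _; apply: mulr_ge0; [apply: ltW|apply: sqr_ge0].
have S0 : 0 <= norm1 u by apply: sumr_ge0 => i _; exact: normr_ge0.
have key : norm1 u ^+ 2 <= A * B.
  have AE : A = \sum_i (w i)^-1 by apply: eq_bigr => i _; rewrite ger0_norm // invr_ge0 ltW.
  have T : 0 <= \sum_i \sum_j ((w i)^-1 * (w j * u j ^+ 2) + (w j)^-1 * (w i * u i ^+ 2)
                             - 2 * (`|u i| * `|u j|)).
    apply: sumr_ge0 => i _; apply: sumr_ge0 => j _.
    have wi := hw i; have wj := hw j.
    have -> : (w i)^-1 * (w j * u j ^+ 2) + (w j)^-1 * (w i * u i ^+ 2) - 2 * (`|u i| * `|u j|)
       = (w j * `|u j| - w i * `|u i|) ^+ 2 / (w i * w j).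
      rewrite -(real_normK (num_real (u i))) -(real_normK (num_real (u j))).
      field; apply/andP; split; apply: lt0r_neq0 => //.
    by apply: divr_ge0; [apply: sqr_ge0 | apply: mulr_ge0; apply: ltW].
  move: T; rewrite (eq_bigr (fun i => \sum_j ((w i)^-1 * (w j * u j ^+ 2)) +
        \sum_j ((w j)^-1 * (w i * u i ^+ 2)) - 2 * (`|u i| * \sum_j `|u j|))); last first.
    by move=> i _; rewrite sumrB big_split /= !mulr_sumr.
  rewrite sumrB big_split /=.
  have E1 : \sum_i \sum_j (w i)^-1 * (w j * u j ^+ 2) = A * B.
    by rewrite AE mulr_suml; apply: eq_bigr => i _; rewrite mulr_sumr.
  have E2 : \sum_i \sum_j (w j)^-1 * (w i * u i ^+ 2) = A * B.
    by rewrite exchange_big E1.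
  have E3 : \sum_i 2 * (`|u i| * \sum_j `|u j|) = 2 * norm1 u ^+ 2.
    by rewrite -mulr_sumr -mulr_suml expr2.
  rewrite E1 E2 E3; lra.
rewrite /norm2w -sqrtrM // -(ger0_norm S0) -sqrtr_sqr ler_sqrt //.
exact: mulr_ge0.
Qed.
End Helpers.

Section Graph.
Variables (K : rcfType) (N M : nat) (F : 'I_M -> {set 'I_N} -> K).
Hypotheses (hnorm : forall r, normalized (F r)) (hsub : forall r, submodular (F r)).
Variables (x : 'I_M -> 'I_N -> K) (hx : forall r, in_base (F r) (x r)).

Lemma setsumUI (u : 'I_N -> K) S T :
  setsum u (S :|: T) + setsum u (S :&: T) = setsum u S + setsum u T.
Proof.
rewrite /setsum !(big_mkcond (fun i => i \in _)) -!big_split /=.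
apply: eq_bigr => k _; rewrite !inE.
by case: (k \in S); case: (k \in T); rewrite /= ?addr0 ?add0r.
Qed.

Definition tight r S := setsum (x r) S == F r S.

Lemma tightUI r S T : tight r S -> tight r T -> tight r (S :|: T) /\ tight r (S :&: T).
Proof.
rewrite /tight => /eqP hS /eqP hT.
have := setsumUI (x r) S T; have := hsub r S T.
have [h1 _] := hx r; have := h1 (S :|: T); have := h1 (S :&: T).
rewrite hS hT => a b c d; split; apply/eqP; lra.
Qed.

Lemma tight0 r : tight r set0.
Proof. by rewrite /tight /setsum big_set0 hnorm. Qed.

Lemma tightT r : tight r setT.
Proof. by rewrite /tight; have [_ ->] := hx r. Qed.

Definition capok r a b := [forall S, (tight r S && (b \in S)) ==> (a \in S)].
Definition edge := [rel a b | [exists r, capok r a b]].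

Lemma tight_bigcap r (P : pred 'I_N) (G : 'I_N -> {set 'I_N}) :
  (forall a, P a -> tight r (G a)) -> tight r (\bigcap_(a | P a) G a).
Proof.
move=> H; apply: (big_ind (tight r)) => //; first exact: tightT.
by move=> A B tA tB; have [] := tightUI tA tB.
Qed.

Lemma tight_bigcup r (P : pred 'I_N) (G : 'I_N -> {set 'I_N}) :
  (forall a, P a -> tight r (G a)) -> tight r (\bigcup_(a | P a) G a).
Proof.
move=> H; apply: (big_ind (tight r)) => //; first exact: tight0.
by move=> A B tA tB; have [] := tightUI tA tB.
Qed.

Lemma closed_tight r (U : {set 'I_N}) :
  (forall a b, b \in U -> a \notin U -> ~~ capok r a b) -> tight r U.
Proof.
move=> H.
pose Sab a b := odflt setT [pick S | tight r S && (b \in S) && (a \notin S)].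
have HS a b : b \in U -> a \notin U -> [/\ tight r (Sab a b), b \in Sab a b & a \notin Sab a b].
  move=> bU aU; rewrite /Sab; case: pickP => [S /andP[/andP[-> ->] ->] //|nS].
  exfalso; move: (H a b bU aU); rewrite negb_forall => /existsP [S].
  rewrite negb_imply => /andP[/andP[t bS] aS]; move: (nS S); by rewrite t bS aS.
pose T b := \bigcap_(a | a \notin U) Sab a b.
have -> : U = \bigcup_(b | b \in U) T b.
  apply/setP => k; apply/idP/idP.
    move=> kU; apply/bigcupP; exists k => //; apply/bigcapP => a aU.
    by have [] := HS a k kU aU.
  move=> /bigcupP [b bU /bigcapP kT]; apply: contraT => kU.
  have [_ _ ] := HS k b bU kU; by rewrite kT.
apply: tight_bigcup => b bU; apply: tight_bigcap => a aU.
by have [] := HS a b bU aU.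
Qed.

Lemma reach (z : 'I_N -> K) (hz : in_base (sumF F) z) i :
  0 < z i - Aop x i -> exists j, connect edge j i /\ z j - Aop x j < 0.
Proof.
move=> hi; apply: NNPP => nex.
pose U := [set k | connect edge k i].
have iU : i \in U by rewrite inE connect0.
have tU r : tight r U.
  apply: closed_tight => a b; rewrite !inE => bi; apply: contra => c.
  apply: connect_trans bi; apply: connect1; rewrite /=; apply/existsP; by exists r.
have e0 k : k \in U -> 0 <= z k - Aop x k.
  rewrite inE => ki; rewrite leNgt; apply/negP => kl; apply: nex; by exists k.
have sU : setsum (fun k => z k - Aop x k) U <= 0.
  have [h1 _] := hz; have := h1 U.
  rewrite /setsum /sumF sumrB /Aop exchange_big /=.
  have -> : \sum_(j < M) \sum_(k in U) x j k = \sum_(r < M) F r U.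
    by apply: eq_bigr => r _; move: (tU r) => /eqP.
  lra.
have : z i - Aop x i <= setsum (fun k => z k - Aop x k) U.
  rewrite /setsum (bigD1 i) //= lerDl; apply: sumr_ge0 => k /andP[kU _]; exact: e0.
lra.
Qed.

Definition lab a b : option 'I_M := [pick r | capok r a b].

Lemma labP a b r : lab a b = Some r -> capok r a b.
Proof. by rewrite /lab; case: pickP => // r' H [<-]. Qed.

Lemma sum_lab (Q : pred 'I_M) a b (c : K) :
  \sum_(r | Q r && (lab a b == Some r)) c =
  if lab a b is Some r0 then (if Q r0 then c else 0) else 0.
Proof.
case: (lab a b) => [r0|]; last by rewrite big_pred0 // => r; rewrite andbF.
case Qr : (Q r0).
  rewrite (big_pred1 r0) // => r /=.
  by apply/idP/eqP => [/andP[_ /eqP [->]]|->] //; rewrite Qr eqxx.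
by rewrite big_pred0 // => r /=; case: eqP => [[<-]|]; rewrite ?Qr ?andbF.
Qed.

Lemma ind_sum (S : {set 'I_N}) b : \sum_(k in S) ((b == k)%:R : K) = (b \in S)%:R.
Proof.
rewrite big_mkcond (bigD1 b) //= eqxx big1 ?addr0; first by case: (b \in S).
move=> k kb; rewrite eq_sym (negbTE kb); by case: (k \in S).
Qed.

Definition delta (j : 'I_N) (p : seq 'I_N) r k : K :=
  \sum_(ab <- zip (j :: p) p | lab ab.1 ab.2 == Some r)
     (((ab.2 == k)%:R) - ((ab.1 == k)%:R)).

Lemma delta_set j p r (S : {set 'I_N}) :
  \sum_(k in S) delta j p r k =
  \sum_(ab <- zip (j :: p) p | lab ab.1 ab.2 == Some r)
     (((ab.2 \in S)%:R) - ((ab.1 \in S)%:R)).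
Proof.
rewrite /delta exchange_big /=; apply: eq_bigr => ab _.
by rewrite sumrB !ind_sum.
Qed.

Lemma delta_tight j p r S : tight r S -> \sum_(k in S) delta j p r k <= 0.
Proof.
move=> tS; rewrite delta_set; apply: sumr_le0 => ab /eqP /labP /forallP /(_ S).
rewrite tS /=; case: (ab.2 \in S) => /= [-> |_]; first by rewrite subrr.
by rewrite sub0r oppr_le0; case: (ab.1 \in S).
Qed.

Lemma delta_tot j p r : \sum_(k in [set: 'I_N]) delta j p r k = 0.
Proof. by rewrite delta_set big1 // => ab _; rewrite !inE subrr. Qed.

Lemma zip_edge j p ab : path edge j p -> ab \in zip (j :: p) p -> edge ab.1 ab.2.
Proof.
elim: p j => [//|q p IH] j /= /andP[e pp]; rewrite inE => /orP[/eqP -> //|].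
exact: IH.
Qed.

Lemma edge_lab a b : edge a b -> exists r, lab a b = Some r.
Proof.
rewrite /lab; case: pickP => [r _|H]; first by exists r.
by move=> /existsP [r c]; move: (H r); rewrite c.
Qed.

Lemma telescope (j : 'I_N) (p : seq 'I_N) (k : 'I_N) :
  \sum_(ab <- zip (j :: p) p) (((ab.2 == k)%:R : K) - ((ab.1 == k)%:R)) =
  (last j p == k)%:R - (j == k)%:R.
Proof.
elim: p j => [|q p IH] j; first by rewrite big_nil subrr.
by rewrite /= big_cons IH /=; ring.
Qed.

Lemma sum_lab1 a b (c : K) :
  \sum_(r | lab a b == Some r) c = if lab a b is Some _ then c else 0.
Proof.
have := sum_lab predT a b c; rewrite (eq_bigl (fun r => lab a b == Some r)) //.
Qed.

Lemma delta_col j p k : path edge j p ->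
  \sum_r delta j p r k = (last j p == k)%:R - (j == k)%:R.
Proof.
move=> pp; rewrite /delta.
under eq_bigr => r _ do rewrite big_mkcond.
rewrite exchange_big /= -telescope; apply: eq_big_seq => ab abz.
rewrite -big_mkcond sum_lab1 /=.
by have [r ->] := edge_lab (zip_edge pp abz).
Qed.

Lemma b2R (b : bool) : (b%:R : K) = if b then 1 else 0.
Proof. by case: b. Qed.

Lemma count_bnd (j : 'I_N) (p : seq 'I_N) (k : 'I_N) : uniq (j :: p) ->
  \sum_(ab <- zip (j :: p) p) ((ab.2 == k)%:R : K) <= (k \in p)%:R /\
  \sum_(ab <- zip (j :: p) p) ((ab.1 == k)%:R : K) <= (k \in j :: p)%:R.
Proof.
elim: p j => [|q p IH] j; first by rewrite !big_nil ler0n.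
move=> /= /andP[jn /andP[qn up]].
have [IH2 IH1] : _ /\ _ := IH q (introT andP (conj qn up)).
rewrite !big_cons /=; split.
  move: IH2; case: (eqVneq q k) => [<-|qk].
    by rewrite (negbTE qn) mem_head !b2R /= => H; lra.
  by rewrite in_cons eq_sym (negbTE qk) /= !b2R /=; lra.
move: IH1; case: (eqVneq j k) => [<-|jk].
  by rewrite (negbTE jn) mem_head !b2R /= => H; lra.
by rewrite (in_cons j) eq_sym (negbTE jk) !b2R /= => H; lra.
Qed.

Lemma delta_W (j : 'I_N) (p : seq 'I_N) k (W : {set 'I_M}) : uniq (j :: p) ->
  - 1 <= \sum_(r in W) delta j p r k <= 1.
Proof.
move=> up; have [c2 c1] := count_bnd k up.
have E : \sum_(r in W) delta j p r k =
   \sum_(ab <- zip (j :: p) p)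
     (if lab ab.1 ab.2 is Some r0 then (if r0 \in W then
        ((ab.2 == k)%:R - (ab.1 == k)%:R) else 0) else 0).
  rewrite /delta; under eq_bigr => r _ do rewrite big_mkcond.
  rewrite exchange_big /=; apply: eq_bigr => ab _.
  by rewrite -big_mkcondr sum_lab.
have c2' : \sum_(ab <- zip (j :: p) p) ((ab.2 == k)%:R : K) <= 1.
  by apply: le_trans c2 _; rewrite b2R; case: ifP.
have c1' : \sum_(ab <- zip (j :: p) p) ((ab.1 == k)%:R : K) <= 1.
  by apply: le_trans c1 _; rewrite b2R; case: ifP.
rewrite E; apply/andP; split.
  rewrite lerNl; apply: le_trans c1'; rewrite -sumrN; apply: ler_sum => ab _.
  case: (lab _ _) => [r0|]; last by rewrite oppr0 ler0n.
  case: ifP => _; last by rewrite oppr0 ler0n.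
  by rewrite opprB lerBlDr lerDl ler0n.
apply: le_trans c2'; apply: ler_sum => ab _.
case: (lab _ _) => [r0|]; last by rewrite ler0n.
case: ifP => _; last by rewrite ler0n.
by rewrite lerBlDr lerDl ler0n.
Qed.
End Graph.

Section Main.
Variables (K : rcfType) (N M : nat) (F : 'I_M -> {set 'I_N} -> K).
Hypotheses (hnorm : forall r, normalized (F r)) (hsub : forall r, submodular (F r)).
Variables (y : 'I_M -> 'I_N -> K) (hy : forall r, in_base (F r) (y r)).
Variables (z : 'I_N -> K) (hz : in_base (sumF F) z).

Definition Ix := ('I_M * 'I_N)%type.
Notation V := (vec K Ix).
Definition e i := z i - Aop y i.
Definition AX (x : V) i := \sum_r x (r, i).
Definition Pi (x : V) := \sum_(k | 0 < e k) (AX x k - Aop y k).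
Definition Jt := ((('I_M * {set 'I_N}) + 'I_M) + ('I_N + 'I_N) + ('I_N * {set 'I_M} * bool))%type.

Definition hcon (j : Jt) : V -> K :=
  match j with
  | inl (inl (inl (r, S0))) => fun x => \sum_(i in S0) x (r, i) - F r S0
  | inl (inl (inr r)) => fun x => F r setT - \sum_(i in [set: 'I_N]) x (r, i)
  | inl (inr (inl i)) => fun x => AX x i - Aop y i - Num.max (e i) 0
  | inl (inr (inr i)) => fun x => Aop y i + Num.min (e i) 0 - AX x i
  | inr (i, W, b) => fun x => (if b then 1 else -1) * \sum_(r in W) (x (r, i) - y r i) - Pi x
  end.
Definition fobj (x : V) := - Pi x.

Lemma AX_aff i : affine (fun x : V => AX x i).
Proof. by apply: affine_sum => r; apply: affine_coord. Qed.

Lemma Pi_aff : affine Pi.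
Proof. by apply: affine_sum => k; apply: affineB; [apply: AX_aff|apply: affine_const]. Qed.

Lemma hcon_aff j : affine (hcon j).
Proof.
case: j => [[[[r S]|r]|[i|i]]|[[i W] b]] /=.
- by apply: affineB; [apply: affine_sum => k; apply: affine_coord | apply: affine_const].
- by apply: affineB; [apply: affine_const | apply: affine_sum => k; apply: affine_coord].
- by apply: affineB; [apply: affineB; [apply: AX_aff|apply: affine_const] | apply: affine_const].
- by apply: affineB; [apply: affine_const | apply: AX_aff].
- apply: affineB; last exact: Pi_aff.
  apply: affineZ; apply: affine_sum => r; apply: affineB; [apply: affine_coord|apply: affine_const].
Qed.

Lemma fobj_aff : affine fobj.
Proof. by apply: affineN; apply: Pi_aff. Qed.

Lemma sumT (g : 'I_N -> K) : \sum_(i in [set: 'I_N]) g i = \sum_i g i.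
Proof. by apply: eq_bigl => i; rewrite inE. Qed.

Lemma feas_base (x : V) : feas hcon x -> forall r, in_base (F r) (fun i => x (r, i)).
Proof.
move=> fx r; split.
  by move=> S; have := fx (inl (inl (inl (r, S)))); rewrite /= /setsum; lra.
have := fx (inl (inl (inl (r, setT)))); have := fx (inl (inl (inr r))).
rewrite /= /setsum; lra.
Qed.

Lemma hbnd v : exists B, forall x : V, feas hcon x -> `|x v| <= B.
Proof.
case: v => r i.
exists (`|F r [set i]| + `|F r setT - F r (~: [set i])|) => x fx.
have [h1 h2] := feas_base fx r.
have up : x (r, i) <= F r [set i] by have := h1 [set i]; rewrite /setsum big_set1.
have lo : F r setT - F r (~: [set i]) <= x (r, i).
  have Esum : \sum_(k in [set: 'I_N]) x (r,k) = x (r,i) + \sum_(k in [set~ i]) x (r,k).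
    by rewrite (big_setD1 i) ?inE //; congr (_ + _); apply: eq_bigl => k; rewrite !inE andbT.
  by have := h1 [set~ i]; move: h2; rewrite /setsum Esum; lra.
have := ler_norm (F r [set i]); have := ler_norm (- (F r setT - F r (~: [set i]))).
rewrite normrN ler_norml => a b.
have := normr_ge0 (F r [set i]); have := normr_ge0 (F r setT - F r [set~ i]).
move=> c d; apply/andP; split; lra.
Qed.

Definition y0 : V := fun v => y v.1 v.2.

Lemma feas_y : feas hcon y0.
Proof.
case=> [[[[r S]|r]|[i|i]]|[[i W] b]] /=.
- by have [h1 _] := hy r; have := h1 S; rewrite /setsum /y0 /=; lra.
- by have [_ h2] := hy r; move: h2; rewrite /setsum /y0 /=; lra.
- have -> : AX y0 i = Aop y i by [].
  by rewrite subrr sub0r oppr_le0 le_max lexx orbT.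
- have -> : AX y0 i = Aop y i by [].
  by rewrite addrAC subrr add0r ge_min lexx orbT.
- rewrite big1 ?mulr0; last by move=> r _; rewrite /y0 subrr.
  by rewrite /Pi big1 ?subrr // => k _; rewrite /AX /y0 subrr.
Qed.

Lemma min0E (a : K) : a <= 0 -> Num.min a 0 = a.
Proof. by move=> h; rewrite minElt; case: ltP => // H; lra. Qed.

Lemma max0E (a : K) : 0 <= a -> Num.max a 0 = a.
Proof. by move=> h; rewrite maxElt; case: ltP => // H; lra. Qed.

Lemma ind_sumP (P : pred 'I_N) (b : 'I_N) : \sum_(k | P k) ((b == k)%:R : K) = (P b)%:R.
Proof.
rewrite big_mkcond (bigD1 b) //= eqxx big1 ?addr0; first by case: (P b).
move=> k kb; rewrite eq_sym (negbTE kb); by case: (P k).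
Qed.

Lemma sumAop (x : 'I_M -> 'I_N -> K) : (forall r, in_base (F r) (x r)) ->
  \sum_i Aop x i = \sum_r F r setT.
Proof.
move=> hx; rewrite /Aop exchange_big; apply: eq_bigr => r _.
by have [_ <-] := hx r; rewrite /setsum sumT.
Qed.

Lemma sumz : \sum_i z i = \sum_r F r setT.
Proof. by have [_ h2] := hz; rewrite -sumT; exact: h2. Qed.

Lemma sume : \sum_i e i = 0.
Proof. by rewrite /e sumrB sumz sumAop // subrr. Qed.

Section Opt.
Variables (xs : V) (fxs : feas hcon xs) (opt : forall x, feas hcon x -> fobj xs <= fobj x).

Definition xi r i := xs (r, i).

Lemma AopE i : Aop xi i = AX xs i. Proof. by []. Qed.

Lemma resid_le0 i : z i - AX xs i <= 0.
Proof.
rewrite leNgt; apply/negP => hi.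
have bx := feas_base fxs.
have hi' : 0 < z i - Aop xi i by rewrite AopE.
have [j [cj hj]] := reach hnorm hsub bx hz hi'.
rewrite AopE in hj.
case/connectP: cj => p0 pp0; case: (shortenP pp0) => p pp up _ li.
pose d : V := fun v => delta F xi j p v.1 v.2.
have posi : 0 < e i.
  rewrite ltNge; apply/negP => ei.
  have := fxs (inl (inr (inr i))); rewrite /= min0E //; move: hi; rewrite /e; lra.
have posj : ~~ (0 < e j).
  rewrite -leNgt leNgt; apply/negP => ej.
  have := fxs (inl (inr (inl j))); rewrite /= max0E; last lra.
  by move: hj; rewrite /e; lra.
have AXd k : AX d k = (i == k)%:R - (j == k)%:R.
  by rewrite /AX /d /= delta_col // li.
have linPi : lin Pi d = 1.
  rewrite /lin /Pi -sumrB (eq_bigr (fun k => (i == k)%:R - (j == k)%:R)).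
    by rewrite sumrB !ind_sumP posi (negbTE posj) subr0.
  move=> k _; rewrite -AXd /AX /vzero big1_eq; ring.
have linf : lin fobj d = - lin Pi d by rewrite /lin /fobj; ring.
suff : 0 <= lin fobj d by rewrite linf linPi; lra.
apply: (opt_dir hcon_aff fobj_aff fxs opt) => jj.
case: jj => [[[[r S]|r]|[k|k]]|[[k W] b]] /=; rewrite /lin /vzero /=.
- move=> /eqP; rewrite subr_eq0 => tS.
  rewrite big1_eq sub0r opprK subrK.
  exact: (delta_tight (x := xi) j p tS).
- move=> _; rewrite big1_eq.
  rewrite (eq_bigr (fun i => delta F xi j p r i)) // delta_tot; lra.
- move=> act; rewrite /AX big1_eq -/(AX d k) AXd.
  case: (eqVneq i k) => [ik|ik].
    move: act; rewrite -ik max0E; last lra.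
    by move: hi; rewrite /e; lra.
  by rewrite !b2R; case: (j == k); lra.
- move=> act; rewrite /AX big1_eq -/(AX d k) AXd.
  case: (eqVneq j k) => [jk|jk].
    move: act; rewrite -jk min0E; last by move: posj; rewrite -leNgt.
    by move: hj; rewrite /e; lra.
  by rewrite !b2R; case: (i == k); lra.
- move=> _.
  have lp : Pi d - Pi (fun=> 0) = 1 := linPi.
  have sW : \sum_(r in W) (d (r, k) - y r k) =
            \sum_(r in W) delta F xi j p r k + \sum_(r in W) (0 - y r k).
    by rewrite -big_split; apply: eq_bigr => r _ /=; rewrite /d /=; ring.
  have /andP[w1 w2] := delta_W F xi k W up.
  by rewrite sW; case: b; lra.
Qed.

Lemma AxiE : Aop xi = z.
Proof.
apply: functional_extensionality => i.
have S : \sum_k (z k - AX xs k) = 0.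
  have := sumAop (feas_base fxs); rewrite sumrB sumz => <-; rewrite subrr //.
have := resid_le0 i; rewrite (bigD1 i) //= in S.
have : \sum_(k | k != i) (z k - AX xs k) <= 0 by apply: sumr_le0 => k _; exact: resid_le0.
rewrite AopE; lra.
Qed.

Lemma PiE : Pi xs = \sum_(k | 0 < e k) e k.
Proof.
apply: eq_bigr => k _; rewrite /e; congr (_ - _).
by rewrite -AopE AxiE.
Qed.

Lemma Pi_ge0 : 0 <= Pi xs.
Proof. by rewrite PiE; apply: sumr_ge0 => k /ltW. Qed.

Lemma node_bound k : \sum_r (xi r k - y r k) ^+ 2 <= 2 * (Pi xs) ^+ 2.
Proof.
pose dd r := xi r k - y r k.
have c1 := fxs (inr (k, [set r | 0 < dd r], true)).
have c2 := fxs (inr (k, [set r | ~~ (0 < dd r)], false)).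
rewrite /= mul1r in c1; rewrite /= mulN1r in c2.
set a := \sum_(r in [set r | 0 < dd r]) (xs (r, k) - y r k) in c1.
set b := \sum_(r in [set r | ~~ (0 < dd r)]) (xs (r, k) - y r k) in c2.
have aE : a = \sum_(r | 0 < dd r) dd r by apply: eq_bigl => r; rewrite inE.
have bE : - b = \sum_(r | ~~ (0 < dd r)) (- dd r).
  by rewrite /b -sumrN; apply: eq_bigl => r; rewrite inE.
have a0 : 0 <= a by rewrite aE; apply: sumr_ge0 => r /ltW.
have b0 : 0 <= - b by rewrite bE; apply: sumr_ge0 => r; rewrite -leNgt oppr_ge0.
rewrite (bigID (fun r => 0 < dd r)) /=.
have s1 : \sum_(r | 0 < dd r) dd r ^+ 2 <= a ^+ 2.
  by rewrite aE; apply: sq_le => r /ltW.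
have s2 : \sum_(r | ~~ (0 < dd r)) dd r ^+ 2 <= (- b) ^+ 2.
  rewrite bE (eq_bigr (fun r => (- dd r) ^+ 2)); last by move=> r _; rewrite sqrrN.
  by apply: sq_le => r; rewrite -leNgt oppr_ge0.
have P0 := Pi_ge0.
have a2 : a ^+ 2 <= Pi xs ^+ 2 by rewrite !expr2; apply: ler_pM => //; lra.
have b2 : (- b) ^+ 2 <= Pi xs ^+ 2 by rewrite !expr2; apply: ler_pM => //; lra.
rewrite /dd in s1 s2; lra.
Qed.
End Opt.

Lemma mnode_ge0 (theta : 'I_M -> 'I_N -> K) (ht : forall r i, 0 < theta r i) i :
  0 <= \big[Num.max/0]_(r | incident (F r) i) theta r i.
Proof.
apply: (big_ind (fun v => 0 <= v)) => //.
  by move=> a b a0 _; rewrite le_max a0.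
by move=> r _; apply: ltW.
Qed.

Lemma main_result (theta : 'I_M -> 'I_N -> K) (htheta : forall r i, 0 < theta r i)
  (w : 'I_N -> K) (hw : forall i, 0 < w i) :
  exists xi : 'I_M -> 'I_N -> K,
    (forall r, in_base (F r) (xi r)) /\
    Aop xi = z /\
    norm2theta theta (fun r i => xi r i - y r i)
      <= Num.sqrt (norm1inf F theta / 2) * norm1 (fun i => Aop y i - z i) /\
    norm2theta theta (fun r i => xi r i - y r i)
      <= Num.sqrt (norm1inf F theta * norm1 (fun i => (w i)^-1) / 2)
         * norm2w w (fun i => Aop y i - z i).
Proof.
have [xs fxs opt] := LPmin hcon_aff fobj_aff hbnd feas_y.
set P := Pi xs.
have P0 : 0 <= P := Pi_ge0 fxs opt.
have n1 : norm1 (fun i => Aop y i - z i) = 2 * P.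
  rewrite /P (PiE fxs opt) /norm1.
  rewrite (eq_bigr (fun i => `|e i|)); last by move=> i _; rewrite /e distrC.
  have E1 : \sum_(i | 0 < e i) `|e i| = \sum_(i | 0 < e i) e i.
    by apply: eq_bigr => k /ltW /ger0_norm.
  have E2 : \sum_(i | ~~ (0 < e i)) `|e i| = - \sum_(i | ~~ (0 < e i)) e i.
    by rewrite -sumrN; apply: eq_bigr => k; rewrite -leNgt => /ler0_norm.
  have S := sume; rewrite (bigID (fun k => 0 < e k)) /= in S.
  rewrite (bigID (fun k => 0 < e k)) /= E1 E2; lra.
set n := norm1inf F theta.
have n0 : 0 <= n by apply: sumr_ge0 => i _; apply: mnode_ge0.
have T : \sum_r \sum_i theta r i * (xi xs r i - y r i) ^+ 2 <= n * (2 * P ^+ 2).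
  rewrite exchange_big /n /norm1inf mulr_suml; apply: ler_sum => i _.
  apply: le_trans (_ : \big[Num.max/0]_(r | incident (F r) i) theta r i *
                       \sum_r (xi xs r i - y r i) ^+ 2 <= _); last first.
    by apply: ler_wpM2l; [apply: mnode_ge0 | apply: node_bound].
  rewrite mulr_sumr; apply: ler_sum => r _.
  have [inc|ninc] := boolP (incident (F r) i).
    apply: ler_wpM2r; first exact: sqr_ge0.
    by apply: le_bigmax_cond.
  have h1 : xi xs r i = 0 := nonincident (hnorm r) (feas_base fxs r) ninc.
  rewrite h1.
  rewrite (nonincident (hnorm r) (hy r) ninc) subrr expr2 !mulr0 //.
have B1 : norm2theta theta (fun r i => xi xs r i - y r i)
           <= Num.sqrt (n / 2) * norm1 (fun i => Aop y i - z i).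
  rewrite n1.
  have E : Num.sqrt (n / 2 * (2 * P) ^+ 2) = Num.sqrt (n / 2) * (2 * P).
    have h2 : 0 <= 2 * P by lra.
    by rewrite sqrtrM ?divr_ge0 // sqrtr_sqr ger0_norm.
  rewrite -E.
  rewrite /norm2theta ler_sqrt; last by apply: mulr_ge0; [apply: divr_ge0|apply: sqr_ge0].
  by apply: le_trans T _; rewrite le_eqVlt; apply/orP; left; apply/eqP; field.
exists (xi xs); split; first exact: (feas_base fxs).
split; first exact: AxiE.
split; first exact: B1.
apply: le_trans B1 _.
have c := CS (fun i => Aop y i - z i) hw.
have -> : n * norm1 (fun i => (w i)^-1) / 2 = n / 2 * norm1 (fun i => (w i)^-1) by ring.
have h2 : 0 <= n / 2 by apply: divr_ge0.
rewrite (sqrtrM _ h2) -mulrA; apply: ler_wpM2l; first exact: sqrtr_ge0.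
exact: c.
Qed.
End Main.

Unset Implicit Arguments.

Theorem lemma3p1 (K : rcfType) (N M : nat)
  (F : 'I_M -> {set 'I_N} -> K)
  (hnorm : forall r, normalized (F r))
  (hsub : forall r, submodular (F r))
  (hcover : forall i : 'I_N, exists r : 'I_M, incident (F r) i)
  (theta : 'I_M -> 'I_N -> K) (htheta : forall r i, 0 < theta r i)
  (w : 'I_N -> K) (hw : forall i, 0 < w i)
  (y : 'I_M -> 'I_N -> K) (hy : forall r, in_base (F r) (y r))
  (z : 'I_N -> K) (hz : in_base (sumF F) z) :
  exists xi : 'I_M -> 'I_N -> K,
    (forall r, in_base (F r) (xi r)) /\
    Aop xi = z /\
    norm2theta theta (fun r i => xi r i - y r i)
      <= Num.sqrt (norm1inf F theta / 2) * norm1 (fun i => Aop y i - z i) /\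
    norm2theta theta (fun r i => xi r i - y r i)
      <= Num.sqrt (norm1inf F theta * norm1 (fun i => (w i)^-1) / 2)
         * norm2w w (fun i => Aop y i - z i).
Proof. exact: main_result. Qed.
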